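(* Let $\mathbb{F}\in\{\mathbb{R},\mathbb{C}\}$, $M>N$, and $0\le k\le M$. If $\Phi\in\mathcal{P}(M,N)$ and $\Psi\in\mathcal{P}(M,M-N)$ are Naimark complements, then $\Phi$ maximizes $NE_k$ over $\mathcal{P}(M,N)$ if and only if $\Psi$ maximizes $NE_{M-k}$ over $\mathcal{P}(M,M-N)$.
   Context: $\mathcal{P}(M,n)$ is the set of Parseval frames for $\mathbb{F}^n$ with $M$ vectors, i.e. families $\{\varphi_i\}_{i=1}^M\subseteq\mathbb{F}^n$ whose $n\times M$ matrix $\Phi$ satisfies $\Phi\Phi^*=I$. $\Phi\in\mathcal{P}(M,N)$ and $\Psi\in\mathcal{P}(M,M-N)$ are Naimark complements if $\Psi^*\Psi=I-\Phi^*\Phi$. For $K\subseteq[M]$, $\Phi_K$ is the submatrix of columns indexed by $K$. The nuclear norm $\|F\|_*$ is the sum of the singular values of $F$, and $NE_k(\Phi)=\sum_{|K|=k}\|\Phi_K\|_*$. *)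

(* Defs.v *)
(* The scalar field F in {R, C} is modelled inside the
   complex numbers C = R[i] over a real number field R : realType:
   the complex case uses all of C, the real case restricts every matrix
   entry to be real (Im = 0). *)
From HB Require Import structures.
From mathcomp Require Import all_boot all_order all_algebra.
From mathcomp Require Import reals complex.
Set Implicit Arguments. Unset Strict Implicit. Unset Printing Implicit Defensive.
Import Order.TTheory GRing.Theory Num.Theory.
Local Open Scope ring_scope.

Section Frames.
Variable C : numClosedFieldType.

Definition adjmx m n (A : 'M[C]_(m, n)) : 'M[C]_(n, m) :=
  \matrix_(i, j) (A j i)^*.

Definition entries_in (realF : bool) m n (A : 'M[C]_(m, n)) : bool :=
  realF ==> [forall i, [forall j, A i j \is Num.real]].

Definition parseval (realF : bool) (M n : nat) (Phi : 'M[C]_(n, M)) : Prop :=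
  entries_in realF Phi /\ Phi *m adjmx Phi = 1%:M.

Definition naimark_compl M N (Phi : 'M[C]_(N, M)) (Psi : 'M[C]_(M - N, M))
  : Prop := adjmx Psi *m Psi = 1%:M - adjmx Phi *m Phi.

Lemma char_poly_splits n (B : 'M[C]_n) :
  exists s : seq C, char_poly B == \prod_(z <- s) ('X - z%:P).
Proof.
have [s Hs] := closed_field_poly_normal (char_poly B).
by exists s; rewrite {1}Hs (monicP (char_poly_monic B)) scale1r.
Qed.

Definition eigenvalues n (B : 'M[C]_n) : seq C := xchoose (char_poly_splits B).

(* singular values of A : the square roots of the eigenvalues of A^* A
   (the extra zero singular values are irrelevant for their sum) *)
Definition singular_values m n (A : 'M[C]_(m, n)) : seq C :=
  [seq sqrtC z | z <- eigenvalues (adjmx A *m A)].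

Definition nuclear_norm m n (A : 'M[C]_(m, n)) : C :=
  \sum_(s <- singular_values A) s.

Definition colsubset n M (Phi : 'M[C]_(n, M)) (K : {set 'I_M}) : 'M[C]_(n, #|K|) :=
  colsub (fun j : 'I_#|K| => enum_val j) Phi.

Definition NE n M (k : nat) (Phi : 'M[C]_(n, M)) : C :=
  \sum_(K : {set 'I_M} | #|K| == k) nuclear_norm (colsubset Phi K).

Definition maximizes_NE (realF : bool) M n k (Phi : 'M[C]_(n, M)) : Prop :=
  forall Phi' : 'M[C]_(n, M), parseval realF Phi' -> NE k Phi' <= NE k Phi.

End Frames.

(* Main.v *)
Require Import Defs.
From HB Require Import structures.
From mathcomp Require Import reals complex.
From mathcomp Require Import all_boot all_order all_algebra ring lra zify.
Set Implicit Arguments. Unset Strict Implicit. Unset Printing Implicit Defensive.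
Import Order.TTheory GRing.Theory Num.Theory.
Local Open Scope ring_scope.

Section S.
Variable C : numClosedFieldType.

Lemma charpoly_AB m n (A : 'M[C]_(m,n)) (B : 'M[C]_(n,m)) :
  'X^n * char_poly (A *m B) = 'X^m * char_poly (B *m A).
Proof.
set a := map_mx polyC A; set b := map_mx polyC B.
set D := block_mx ('X%:M : 'M[{poly C}]_m) a b 1%:M.
have E1 : D *m block_mx 1%:M 0 (-b) 1%:M = block_mx (char_poly_mx (A *m B)) a 0 1%:M.
  rewrite mulmx_block !mulmx1 !mul1mx !mulmx0 !add0r mulmxN.
  by rewrite /char_poly_mx map_mxM -/a -/b subrr.
have E2 : block_mx 1%:M 0 (-b) ('X%:M) *m D = block_mx ('X%:M) a 0 (char_poly_mx (B *m A)).
  rewrite mulmx_block !mul1mx !mul0mx !addr0 mulNmx mul_mx_scalar mul_scalar_mx.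
  by rewrite /char_poly_mx map_mxM -/a -/b mulNmx mulmx1 addNr addrC.
have d1 : \det D = char_poly (A *m B).
  have := congr1 determinant E1.
  rewrite det_mulmx det_lblock !det1 mulr1 det_ublock ?det1 ?mulr1 => ->.
  by rewrite ?mulr1.
have := congr1 determinant E2; rewrite det_mulmx det_lblock det_ublock d1 ?det1 !det_scalar ?expr1n ?mul1r.
by rewrite /char_poly.
Qed.

Lemma charpoly_1B n (A : 'M[C]_n) (s : seq C) :
  char_poly A = \prod_(z <- s) ('X - z%:P) ->
  char_poly (1%:M - A) = \prod_(z <- s) ('X - (1 - z)%:P).
Proof.
move=> hA.
have hs : size s = n.
  by have := size_char_poly A; rewrite hA size_prod_XsubC => -[].
have e1 : char_poly A \Po (1 - 'X) = (-1) ^+ n * char_poly (1%:M - A).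
  rewrite /char_poly -det_map_mx.
  have -> : map_mx (comp_poly (1 - 'X)) (char_poly_mx A)
            = - char_poly_mx (1%:M - A).
    apply/matrixP => i j; rewrite !mxE /=.
    case: (i == j); rewrite /= ?mulr1n ?mulr0n comp_polyB comp_polyC ?comp_polyX
       ?comp_poly0 ?polyCB; rewrite ?rmorphB ?rmorph1 /=; ring.
  by rewrite -scaleN1r detZ.
have e2 : \prod_(z <- s) ('X - z%:P) \Po (1 - 'X)
          = (-1) ^+ n * \prod_(z <- s) ('X - (1 - z)%:P).
  rewrite rmorph_prod /= -hs; elim: s {hA hs} => [|z s IH]; first by rewrite !big_nil expr0 mul1r.
  rewrite !big_cons IH /= exprS comp_polyB comp_polyX comp_polyC polyCB.
  ring.
have := e1; rewrite hA e2 => /(congr1 (fun p => (-1) ^+ n * p)).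
by rewrite !mulrA -exprD -signr_odd oddD addbb /= expr0 !mul1r => ->.
Qed.

Definition sqs (s : seq C) := \sum_(z <- s) sqrtC z.

Lemma eigE n (B : 'M[C]_n) : char_poly B = \prod_(z <- eigenvalues B) ('X - z%:P).
Proof. exact/eqP/(xchooseP (char_poly_splits B)). Qed.

Lemma Xn_prod n : 'X^n = \prod_(z <- nseq n (0:C)) ('X - z%:P).
Proof. by elim: n => [|n IH]; rewrite ?big_nil ?expr0 // big_cons exprS IH subr0. Qed.

Lemma sqs_cat s t : sqs (s ++ t) = sqs s + sqs t.
Proof. by rewrite /sqs big_cat. Qed.

Lemma sqs_nseq n c : sqs (nseq n c) = sqrtC c *+ n.
Proof. by elim: n => [|n IH]; rewrite /sqs ?big_nil // big_cons -/(sqs _) IH mulrS. Qed.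

Lemma sqs_perm s t : perm_eq s t -> sqs s = sqs t.
Proof. by move=> p; apply: perm_big. Qed.

Lemma nuclearE m n (A : 'M[C]_(m, n)) : nuclear_norm A = sqs (eigenvalues (adjmx A *m A)).
Proof. by rewrite /nuclear_norm /singular_values big_map. Qed.

Lemma adjmxM m n p (A : 'M[C]_(m, n)) (B : 'M[C]_(n, p)) :
  adjmx (A *m B) = adjmx B *m adjmx A.
Proof.
apply/matrixP => i j; rewrite !mxE rmorph_sum; apply: eq_bigr => l _.
by rewrite !mxE rmorphM mulrC.
Qed.

Lemma adjmxK m n (A : 'M[C]_(m, n)) : adjmx (adjmx A) = A.
Proof. by apply/matrixP => i j; rewrite !mxE conjCK. Qed.

Lemma key N m k k' (A : 'M[C]_(N, k)) (B : 'M[C]_(m, k)) (B' : 'M[C]_(m, k')) :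
  adjmx A *m A + adjmx B *m B = 1%:M ->
  B *m adjmx B + B' *m adjmx B' = 1%:M ->
  nuclear_norm B' + k%:R = nuclear_norm A + m%:R.
Proof.
move=> h1 h2.
set sA := eigenvalues (adjmx A *m A).
have hB : char_poly (adjmx B *m B) = \prod_(z <- map (fun z => 1 - z) sA) ('X - z%:P).
  rewrite big_map -(charpoly_1B (eigE _)); congr char_poly.
  by rewrite -h1 addrAC subrr add0r.
set t := eigenvalues (B *m adjmx B).
have p1 : perm_eq (t ++ nseq k 0) (map (fun z => 1 - z) sA ++ nseq m 0).
  apply: prod_XsubC_eq; rewrite !big_cat /= -!Xn_prod -eigE -hB.
  by rewrite mulrC charpoly_AB mulrC.
have hB' : char_poly (B' *m adjmx B') = \prod_(z <- map (fun z => 1 - z) t) ('X - z%:P).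
  rewrite big_map -(charpoly_1B (eigE _)); congr char_poly.
  by rewrite -h2 addrAC subrr add0r.
set u := eigenvalues (adjmx B' *m B').
have p2 : perm_eq (map (fun z => 1 - z) t ++ nseq k' 0) (u ++ nseq m 0).
  apply: prod_XsubC_eq; rewrite !big_cat /= -!Xn_prod -eigE -hB'.
  by rewrite mulrC charpoly_AB mulrC.
have e1 : nuclear_norm B' = sqs (map (fun z => 1 - z) t).
  rewrite nuclearE -/u.
  have := sqs_perm p2; rewrite !sqs_cat !sqs_nseq sqrtC0 !mul0rn !addr0 => ->.
  done.
have p3 := perm_map (fun z => 1 - z) p1.
have mm : forall s : seq C, map (fun z => 1 - z) (map (fun z => 1 - z) s) = s.
  by elim => //= z s ->; congr (_ :: _); ring.
rewrite e1 nuclearE -/sA.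
have := sqs_perm p3; rewrite !map_cat mm !sqs_cat !map_nseq subr0 !sqs_nseq sqrtC1.
by [].
Qed.


Lemma colsub_adjM n M (X : 'M[C]_(n, M)) (Y : 'M[C]_(n, M)) (K : {set 'I_M}) a b :
  (adjmx (colsubset X K) *m colsubset Y K) a b = (adjmx X *m Y) (enum_val a) (enum_val b).
Proof. by rewrite !mxE; apply: eq_bigr => i _; rewrite !mxE. Qed.

Lemma h1_sub N m M (Phi : 'M[C]_(N, M)) (Psi : 'M[C]_(m, M)) (K : {set 'I_M}) :
  adjmx Phi *m Phi + adjmx Psi *m Psi = 1%:M ->
  adjmx (colsubset Phi K) *m colsubset Phi K + adjmx (colsubset Psi K) *m colsubset Psi K = 1%:M.
Proof.
move=> h; apply/matrixP => a b; rewrite [LHS]mxE !colsub_adjM.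
have -> : forall (U V : 'M[C]_M) i j, U i j + V i j = (U + V) i j by move=> U V i j; rewrite mxE.
rewrite h !mxE.
by rewrite (inj_eq enum_val_inj).
Qed.

Lemma h2_sub m M (Psi : 'M[C]_(m, M)) (K : {set 'I_M}) :
  Psi *m adjmx Psi = 1%:M ->
  colsubset Psi K *m adjmx (colsubset Psi K) + colsubset Psi (~: K) *m adjmx (colsubset Psi (~: K)) = 1%:M.
Proof.
move=> h; rewrite -h; apply/matrixP => i j; rewrite !mxE.
rewrite (bigID (fun l => l \in K)) /=.
congr (_ + _).
  rewrite (big_enum_val (fun l => Psi i l * (adjmx Psi) l j)) /=.
  by apply: eq_bigr => a _; rewrite !mxE.
rewrite (eq_bigl (fun l => l \in ~: K)); last by move=> l; rewrite in_setC.
rewrite (big_enum_val (fun l => Psi i l * (adjmx Psi) l j)) /=.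
by apply: eq_bigr => a _; rewrite !mxE.
Qed.

Lemma NE_rel N m M k (Phi : 'M[C]_(N, M)) (Psi : 'M[C]_(m, M)) : (k <= M)%N ->
  adjmx Phi *m Phi + adjmx Psi *m Psi = 1%:M -> Psi *m adjmx Psi = 1%:M ->
  NE (M - k) Psi + \sum_(K : {set 'I_M} | #|K| == k) (k%:R : C)
  = NE k Phi + \sum_(K : {set 'I_M} | #|K| == k) (m%:R : C).
Proof.
move=> hk h1 h2.
have -> : NE (M - k) Psi = \sum_(K : {set 'I_M} | #|K| == k) nuclear_norm (colsubset Psi (~: K)).
  rewrite /NE (reindex_inj (@setC_inj 'I_M)) /=.
  apply: eq_bigl => K /=; have := cardsC K; rewrite card_ord => hc.
  move: hc; move: (#|K|) (#|~: K|) => x y hc.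
  by apply/eqP/eqP => ?; lia.
rewrite /NE.
rewrite /NE.
transitivity (\sum_(K : {set 'I_M} | #|K| == k) (nuclear_norm (colsubset Psi (~: K)) + (k%:R : C))).
  by rewrite big_split.
transitivity (\sum_(K : {set 'I_M} | #|K| == k) (nuclear_norm (colsubset Phi K) + (m%:R : C))); last first.
  by rewrite big_split.
apply: eq_bigr => K /eqP hK.
rewrite -hK; exact: (key (h1_sub K h1) (h2_sub K h2)).
Qed.


Lemma adjmx_col m1 m2 n (A : 'M[C]_(m1, n)) (B : 'M[C]_(m2, n)) :
  adjmx (col_mx A B) = row_mx (adjmx A) (adjmx B).
Proof. by apply/matrixP => i j; rewrite !mxE; case: splitP => k _; rewrite mxE. Qed.

Lemma adjmx_row m n1 n2 (A : 'M[C]_(m, n1)) (B : 'M[C]_(m, n2)) :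
  adjmx (row_mx A B) = col_mx (adjmx A) (adjmx B).
Proof. by apply/matrixP => i j; rewrite !mxE; case: splitP => k _; rewrite mxE. Qed.

Lemma adjmxZ m n a (A : 'M[C]_(m, n)) : adjmx (a *: A) = a^* *: adjmx A.
Proof. by apply/matrixP => i j; rewrite !mxE rmorphM. Qed.

Lemma adjmx0 m n : adjmx (0 : 'M[C]_(m, n)) = 0.
Proof. by apply/matrixP => i j; rewrite !mxE rmorph0. Qed.

Lemma entries_in_col b m1 m2 n (A : 'M[C]_(m1, n)) (B : 'M[C]_(m2, n)) :
  entries_in b A -> entries_in b B -> entries_in b (col_mx A B).
Proof.
rewrite /entries_in; case: b => //= /forallP hA /forallP hB.
apply/forallP => i; apply/forallP => j; rewrite mxE; case: splitP => k _.
  exact: (forallP (hA k)).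
exact: (forallP (hB k)).
Qed.


Lemma real_ker b p M (X : 'M[C]_(p, M)) : (p < M)%N -> entries_in b X ->
  exists w : 'rV[C]_M, [/\ w != 0, entries_in b w & w *m adjmx X = 0].
Proof.
move=> hp hX.
have : kermx (adjmx X) != 0.
  rewrite -mxrank_eq0 mxrank_ker subn_eq0 -ltnNge.
  exact: leq_ltn_trans (rank_leq_col (adjmx X)) hp.
case/rowV0Pn => u /sub_kermxP hu u0.
case: b hX => /= hX; last by exists u; split.
have hXr : forall i j, X i j \is Num.real by move=> i j; exact: (forallP (forallP hX i) j).
have hadj : map_mx (@Num.conj C) (adjmx X) = adjmx X.
  by apply/matrixP => i j; rewrite !mxE !(conj_Creal (hXr j i)).
have hc : map_mx (@Num.conj C) u *m adjmx X = 0.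
  by rewrite -hadj -map_mxM hu; apply/matrixP => i j; rewrite !mxE rmorph0.
set w1 := u + map_mx (@Num.conj C) u.
set w2 := 'i *: (u - map_mx (@Num.conj C) u).
have k1 : w1 *m adjmx X = 0 by rewrite mulmxDl hu hc addr0.
have k2 : w2 *m adjmx X = 0 by rewrite -scalemxAl mulmxBl hu hc subr0 scaler0.
have r1 : [forall i, [forall j, w1 i j \is Num.real]].
  apply/forallP => i; apply/forallP => j; by rewrite !mxE CrealE rmorphD /= (conjCK (u i j)) addrC.
have r2 : [forall i, [forall j, w2 i j \is Num.real]].
  apply/forallP => i; apply/forallP => j; rewrite !mxE CrealE rmorphM rmorphB /= (conjCK (u i j)) conjCi.
  by apply/eqP; ring.
have [w10|w1N0] := eqVneq w1 0; last by exists w1; split.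
have [w20|w2N0] := eqVneq w2 0; last by exists w2; split.
case/negP: u0; apply/eqP.
have e : u = 2^-1 *: (w1 - 'i *: w2).
  apply/matrixP => i j; rewrite !mxE.
  have h2 : (2 : C) != 0 by rewrite pnatr_eq0.
  by rewrite mulrA -expr2 sqrCi; field.
by rewrite e w10 w20 scaler0 subr0 scaler0.
Qed.


Lemma normalize b M (w : 'rV[C]_M) : w != 0 -> entries_in b w ->
  exists v : 'rV[C]_M, [/\ entries_in b v, v *m adjmx v = 1%:M & exists a : C, v = a *: w].
Proof.
move=> w0 hw.
set c := (w *m adjmx w) 0 0.
have cE : c = \sum_j `|w 0 j| ^+ 2.
  by rewrite /c mxE; apply: eq_bigr => j _; rewrite mxE normCK.
have c_ge0 : 0 <= c by rewrite cE; apply: sumr_ge0 => j _; exact: exprn_ge0.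
have c_neq0 : c != 0.
  apply: contra w0; rewrite cE psumr_eq0 => [/allP h|j _]; last exact: exprn_ge0.
  apply/eqP/matrixP => i j; rewrite !mxE (ord1 i).
  have := h j (mem_index_enum j); rewrite /= expf_eq0 /= normr_eq0.
  by move/eqP.
set s := sqrtC c.
have s_real : s \is Num.real by exact: sqrtC_real.
have s0 : s != 0 by rewrite sqrtC_eq0.
exists (s^-1 *: w); split.
- case: b hw => //= /forallP hw; apply/forallP => i; apply/forallP => j.
  by rewrite mxE rpredM ?rpredV //; exact: (forallP (hw i) j).
- rewrite adjmxZ -scalemxAl -scalemxAr scalerA (mx11_scalar (w *m adjmx w)) -/c.
  rewrite conj_Creal ?rpredV // scale_scalar_mx.
  congr (_%:M); rewrite -(sqrtCK c) -/s; field; exact: s0.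
- by exists s^-1.
Qed.


Lemma complete b M q : forall p (X : 'M[C]_(p, M)), (p + q = M)%N ->
  entries_in b X -> X *m adjmx X = 1%:M ->
  exists Y : 'M[C]_(q, M),
    [/\ entries_in b Y, Y *m adjmx Y = 1%:M & adjmx X *m X + adjmx Y *m Y = 1%:M].
Proof.
elim: q => [|q IH] p X hpq hX hXX.
  exists 0; split.
  - by case: b {hX} => //=; apply/forallP => -[].
  - by apply/matrixP => -[].
  - rewrite addn0 in hpq; subst M.
    by rewrite adjmx0 mul0mx addr0; exact: mulmx1C.
have hp : (p < M)%N by lia.
have [w [w0 hw hwX]] := real_ker hp hX.
have [v [hv hvv [a hva]]] := normalize w0 hw.
have hvX : v *m adjmx X = 0 by rewrite hva -scalemxAl hwX scaler0.
have hXv : X *m adjmx v = 0.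
  by rewrite -[X in X *m _]adjmxK -adjmxM hvX adjmx0.
set X' := col_mx X v.
have hX'X' : X' *m adjmx X' = 1%:M.
  by rewrite adjmx_col mul_col_row hXX hvv hvX hXv -scalar_mx_block.
have hpq' : ((p + 1) + q = M)%N by lia.
have [Y' [hY' hY'Y' hsum]] := IH (p + 1)%N X' hpq' (entries_in_col hX hv) hX'X'.
have hY'v : Y' *m adjmx v = 0.
  have e : Y' *m adjmx X' *m X' = 0.
    have := congr1 (mulmx Y') hsum.
    rewrite mulmxDr mulmx1 !mulmxA hY'Y' mul1mx.
    by move/(congr1 (fun Z => Z - Y')); rewrite addrK subrr.
  have := congr1 (mulmx^~ (adjmx X')) e; rewrite mul0mx -mulmxA hX'X' mulmx1.
  by rewrite adjmx_col mul_mx_row -row_mx0 => /eq_row_mx [_ ->].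
have hvY' : v *m adjmx Y' = 0.
  by rewrite -[v in v *m _]adjmxK -adjmxM hY'v adjmx0.
have f1 : col_mx v Y' *m adjmx (col_mx v Y') = 1%:M.
  by rewrite adjmx_col mul_col_row hvv hY'Y' hY'v hvY' -scalar_mx_block.
have f2 : adjmx X *m X + adjmx (col_mx v Y') *m (col_mx v Y') = 1%:M.
  by rewrite adjmx_col mul_row_col addrA -hsum /X' adjmx_col mul_row_col.
exists (col_mx v Y'); split.
- exact: (entries_in_col hv hY').
- exact: f1.
- exact: f2.
Qed.

End S.

Lemma le_transfer (R : numClosedFieldType) (a b a' b' c d : R) :
  a + c = b + d -> a' + c = b' + d -> b' <= b -> a' <= a.
Proof. by move=> e e' h; rewrite -(lerD2r c) e e' lerD2r. Qed.

Unset Implicit Arguments.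

Theorem proposition16 (R : realType) (realF : bool) (M N k : nat)
    (hMN : (N < M)%N) (hk : (k <= M)%N)
    (Phi : 'M[R[i]]_(N, M)) (Psi : 'M[R[i]]_(M - N, M)) :
  parseval realF Phi -> parseval realF Psi -> naimark_compl Phi Psi ->
  (maximizes_NE realF k Phi <-> maximizes_NE realF (M - k) Psi).
Proof.
move=> [hPhiR hPhi] [hPsiR hPsi] hN.
have h1 : adjmx Phi *m Phi + adjmx Psi *m Psi = 1%:M by rewrite hN addrC subrK.
have rel := NE_rel hk h1 hPsi.
split.
- move=> hmax Psi' [hR' hP'].
  have hd : ((M - N) + N = M)%N by rewrite subnK // ltnW.
  have [Phi' [hR'' hP'' hs]] := complete hd hR' hP'.
  have h1' : adjmx Phi' *m Phi' + adjmx Psi' *m Psi' = 1%:M by rewrite addrC.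
  have rel' := NE_rel hk h1' hP'.
  have := hmax Phi' (conj hR'' hP'').
  exact: (le_transfer rel rel').
- move=> hmax Phi' [hR' hP'].
  have hd : (N + (M - N) = M)%N by rewrite subnKC // ltnW.
  have [Psi' [hR'' hP'' hs]] := complete hd hR' hP'.
  have rel' := NE_rel hk hs hP''.
  have h := hmax Psi' (conj hR'' hP'').
  exact: (le_transfer (esym rel) (esym rel') h).
Qed.
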